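(* Let $M$ be a finitely generated monoid and let $G$ be a finite group. Then the direct product $M\times G$ is quasi-isometric to $M$.
   Context: For a monoid $S$ generated by a finite set $A$, $d_A(x,y)=\inf\{|w|:w\in A^*,\ xw=y\}$ ($A^*$ the free monoid on $A$, $\inf\emptyset=\infty$). A map $f:(S,d_A)\to(T,d_B)$ is a quasi-isometry if there are $1\le\lambda<\infty$, $0<\epsilon<\infty$, $0\le\mu<\infty$ with $\frac1\lambda d_A(x,y)-\epsilon\le d_B(f(x),f(y))\le\lambda d_A(x,y)+\epsilon$ for all $x,y$, and for each $t\in T$ some $x\in S$ with $\max(d_B(t,f(x)),d_B(f(x),t))\le\mu$. Finitely generated monoids $S,T$ are quasi-isometric if $(S,d_A)$ and $(T,d_B)$ are quasi-isometric for some finite generating sets $A,B$. *)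

(* Defs.v *)
From HB Require Import structures.
From mathcomp Require Import all_boot all_order all_algebra all_fingroup.
From mathcomp Require Import all_classical all_reals ereal Rstruct.
From Stdlib Require Import Rdefinitions.
From Stdlib Require List.

Set Implicit Arguments.
Unset Strict Implicit.
Unset Printing Implicit Defensive.

Import Order.TTheory GRing.Theory Num.Theory.
Local Open Scope ring_scope.
Local Open Scope classical_set_scope.
Local Open Scope ereal_scope.

Record monoid := Monoid {
  mcarrier :> Type;
  mmul : mcarrier -> mcarrier -> mcarrier;
  mone : mcarrier;
  mmulA : forall x y z, mmul x (mmul y z) = mmul (mmul x y) z;
  mmul1m : forall x, mmul mone x = x;
  mmulm1 : forall x, mmul x mone = x }.

Section Product.
Variables (M : monoid) (gT : finGroupType).

Definition pmul (x y : M * gT) : M * gT := (mmul x.1 y.1, (x.2 * y.2)%g).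
Definition pone : M * gT := (mone M, 1%g).

Lemma pmulA x y z : pmul x (pmul y z) = pmul (pmul x y) z.
Proof. by rewrite /pmul /= mmulA mulgA. Qed.
Lemma pmul1m x : pmul pone x = x.
Proof. by case: x => a b; rewrite /pmul /= mmul1m mul1g. Qed.
Lemma pmulm1 x : pmul x pone = x.
Proof. by case: x => a b; rewrite /pmul /= mmulm1 mulg1. Qed.

Definition prod_monoid : monoid := Monoid pmulA pmul1m pmulm1.
End Product.

Definition eval_word (M : monoid) (w : seq M) : M := foldr (@mmul M) (mone M) w.

Definition word_over (M : monoid) (A : seq M) (w : seq M) : Prop :=
  List.Forall (fun a => List.In a A) w.

Definition generates (M : monoid) (A : seq M) : Prop :=
  forall x : M, exists w, word_over A w /\ x = eval_word w.

Definition finitely_generated (M : monoid) : Prop :=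
  exists A : seq M, generates A.

(* d_A(x,y) = inf { |w| : w in A^*, x w = y }, with inf of empty set = +oo. *)
Definition dist (M : monoid) (A : seq M) (x y : M) : \bar R :=
  ereal_inf [set ((size w)%:R)%:E | w in
               [set w | word_over A w /\ mmul x (eval_word w) = y]].

Definition quasi_isometry (S T : monoid) (A : seq S) (B : seq T) (f : S -> T)
  : Prop :=
  exists (lam eps mu : R),
    [/\ (1 <= lam)%R, (0 < eps)%R, (0 <= mu)%R,
        (forall x y : S,
           (lam^-1)%:E * dist A x y - eps%:E <= dist B (f x) (f y)
           /\ dist B (f x) (f y) <= lam%:E * dist A x y + eps%:E)
      & (forall t : T, exists x : S,
           maxe (dist B t (f x)) (dist B (f x) t) <= mu%:E)].

Definition quasi_isometric (S T : monoid) : Prop :=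
  exists (A : seq S) (B : seq T), generates A /\ generates B /\
    exists f : S -> T, quasi_isometry A B f.

(* Main.v *)
Require Import Defs.
From mathcomp Require Import all_boot all_fingroup.
From mathcomp Require Import all_order all_algebra all_classical all_reals ereal Rstruct.
From Stdlib Require List.
From Stdlib Require Import Lra.

Set Implicit Arguments.
Unset Strict Implicit.
Import Order.TTheory GRing.Theory Num.Theory.

Section Aux.
Local Open Scope ereal_scope.

Lemma eval_cat (M : monoid) (s t : seq M) :
  eval_word (s ++ t) = mmul (eval_word s) (eval_word t).
Proof.
elim: s => [|a s IH] /=; first by rewrite mmul1m.
by rewrite /eval_word /= -/(eval_word _) IH mmulA.
Qed.

Lemma dist_le (M : monoid) (A : seq M) x y w :
  word_over A w -> mmul x (eval_word w) = y -> dist A x y <= ((size w)%:R)%:E.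
Proof.
move=> hw he; apply: ge_ereal_inf; exists ((size w)%:R)%:E => //.
by exists w.
Qed.

Lemma dist_transfer (S T : monoid) (A : seq S) (B : seq T) x y x' y' (k : nat) :
  (forall w, word_over A w -> mmul x (eval_word w) = y ->
     exists w', [/\ word_over B w', mmul x' (eval_word w') = y' &
                    (size w' <= size w + k)%N]) ->
  dist B x' y' <= dist A x y + (k%:R)%:E.
Proof.
move=> H.
rewrite -leeBlDr //.
apply/ereal_infP => _ [w [hw he] <-].
have [w' [hw' he' hs]] := H w hw he.
rewrite leeBlDr //.
apply: le_trans; first exact: (dist_le hw' he').
rewrite -EFinD lee_fin -natrD ler_nat //.
Qed.

Lemma in_In (T : eqType) (x : T) s : x \in s -> List.In x s.
Proof.
elim: s => [|a s IH] //=; rewrite inE => /orP [/eqP ->|/IH]; [left|right] => //.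
Qed.

Lemma In_catl (T : Type) (x : T) s t : List.In x s -> List.In x (s ++ t).
Proof. by elim: s => [|a s IH] //= [->|h]; [left|right; apply: IH]. Qed.
Lemma In_catr (T : Type) (x : T) s t : List.In x t -> List.In x (s ++ t).
Proof. by elim: s => [|a s IH] //= h; right; apply: IH. Qed.
Lemma In_cat_inv (T : Type) (x : T) s t : List.In x (s ++ t) -> List.In x s \/ List.In x t.
Proof.
elim: s => [|a s IH] /=; first by right.
by case=> [->|/IH [h|h]]; [left; left|left; right|right].
Qed.
Lemma In_map (T U : Type) (f : T -> U) x s : List.In x s -> List.In (f x) (map f s).
Proof. by elim: s => [|a s IH] //= [->|h]; [left|right; apply: IH]. Qed.
Lemma In_map_inv (T U : Type) (f : T -> U) y s :
  List.In y (map f s) -> exists x, f x = y /\ List.In x s.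
Proof.
elim: s => [|a s IH] //= [<-|/IH [x [e h]]]; first by exists a; split; [|left].
by exists x; split; [|right].
Qed.
Lemma Forall_cat (T : Type) (P : T -> Prop) s t :
  List.Forall P s -> List.Forall P t -> List.Forall P (s ++ t).
Proof. by elim=> [|a s' ha _ IH] //= ht; constructor; [|apply: IH]. Qed.

End Aux.

Theorem corollary8p4 (M : monoid) (gT : finGroupType) :
  finitely_generated M -> quasi_isometric (prod_monoid M gT) M.
Proof.
move=> [A gA].
set B := mone M :: A.
have gB : generates B.
  move=> x; have [w [hw ->]] := gA x; exists w; split => //.
  by apply: List.Forall_impl hw => a ha; right.
pose lift := fun b : M => ((b, 1%g) : prod_monoid M gT).
pose A' : seq (prod_monoid M gT) :=
  map lift B ++ map (fun g : gT => ((mone M, g) : prod_monoid M gT)) (enum gT).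
have liftW : forall w, word_over B w -> word_over A' (map lift w).
  move=> w; elim => [|a s ha _ IH] /=; constructor => //.
  by apply: In_catl; apply: In_map.
have liftE : forall w, eval_word (map lift w) = ((eval_word w, 1%g) : prod_monoid M gT).
  elim => [|a s IH] //=.
  by rewrite /eval_word /= -/(eval_word _) -/(eval_word (map lift s)) IH /pmul /= mulg1.
have gen1 : forall g : gT, word_over A' [:: ((mone M, g) : prod_monoid M gT)].
  move=> g; constructor; last constructor.
  apply: In_catr.
  apply: (In_map (fun g : gT => ((mone M, g) : prod_monoid M gT))).
  by apply: in_In; rewrite mem_enum.
have catW : forall s t : seq (prod_monoid M gT), word_over A' s -> word_over A' t ->
    word_over A' (s ++ t).
  by move=> s t hs ht; apply: Forall_cat.
have gA' : generates A'.
  move=> [x g]; have [w [hw ->]] := gB x.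
  exists (map lift w ++ [:: (mone M, g)]); split. apply: catW; [exact: liftW | exact: gen1].
  rewrite eval_cat liftE /=.
  by rewrite /eval_word /= /pmul /= mmulm1 mmulm1 mul1g mulg1.
have fstW : forall w : seq (prod_monoid M gT), word_over A' w -> word_over B (map fst w).
  move=> w; elim => [|a s ha _ IH] /=; constructor => //.
  case: (In_cat_inv ha) => h; have [b [<- hb]] := In_map_inv h => //=.
  by left.
have fstE : forall w : seq (prod_monoid M gT), eval_word (map fst w) = (eval_word w).1.
  elim => [|a s IH] //=.
  by rewrite /eval_word /= -/(eval_word _) -/(eval_word (map fst s)) IH.
exists A', B; split => //; split => //.
exists fst, 1%R, 1%R, 0%R; split => //.
- exact: RIneq.Rle_refl.
- exact: RIneq.Rlt_0_1.
- exact: RIneq.Rle_refl.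
- move=> [x g] [y h] /=; split.
  + rewrite invr1 mul1e.
    have := @dist_transfer M (prod_monoid M gT) B A' x y (x, g) (y, h) 1 => H.
    rewrite EFinN leeBlDr //; apply: le_trans (H _) _; last by rewrite mulr1n.
    move=> w hw he.
    exists (map lift w ++ [:: (mone M, (g^-1 * h)%g)]); split.
    * apply: catW; [exact: liftW | exact: gen1].
    * rewrite eval_cat liftE /= /eval_word /= /pmul /= mmulm1 mulg1 mmulA he mmulm1.
      by rewrite mul1g mulgA mulgV mul1g.
    * by clear; elim: w => //= a w IH; rewrite addSn ltnS.
  + rewrite mul1e.
    have H2 : (dist B x y <= dist A' (x, g) (y, h) + (0%:R)%:E)%E.
      apply: (@dist_transfer (prod_monoid M gT) M A' B (x, g) (y, h) x y 0).
      move=> w hw he; exists (map fst w); split.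
      * exact: fstW.
      * by rewrite fstE; move: he; rewrite /= /pmul; case.
      * by rewrite size_map addn0.
    rewrite mulr0n adde0 in H2; apply: le_trans H2 _.
    by rewrite leeDl // lee_fin.
- move=> t; exists (t, 1%g) => /=.
  have h0 : (dist B t t <= 0%:E)%E.
    have := @dist_le M B t t [::] (List.Forall_nil _) (mmulm1 t).
    by rewrite [size _]/= mulr0n.
  by rewrite maxxx.
Qed.
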